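(* Let $L:C(\Sigma_A^+)\to C(\Sigma_A^+)$ be a positive linear operator (i.e. $Lg\ge0$ whenever $g\ge0$) such that $L(\mathcal{P}_\delta)\subset\mathcal{P}_{\delta'}$ for some $0<\delta'<\delta$. Then there exists $\kappa<1$ such that $\Theta(Lf,Lg)\le\kappa\,\Theta(f,g)$ for all $f,g\in\mathcal{P}_\delta$.
   Context: $\Sigma_A^+$ is a one-sided subshift of finite type (compact space). For $\delta>0$, $\mathcal{P}_\delta=\{g\in C(\Sigma_A^+):g>0,\ \sup_{x,y}g(x)/g(y)\le e^\delta\}$. For strictly positive continuous $f,g$, the Hilbert projective metric is $\Theta(f,g)=\log\dfrac{\sup_x f(x)/g(x)}{\inf_x f(x)/g(x)}$. *)

(* Defs.v *)
From HB Require Import structures.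
From mathcomp Require Import all_boot all_order all_algebra.
From mathcomp Require Import all_classical all_reals all_analysis.
Set Implicit Arguments. Unset Strict Implicit. Unset Printing Implicit Defensive.
Import Order.TTheory GRing.Theory Num.Theory.
Local Open Scope classical_set_scope.
Local Open Scope ring_scope.

(* One-sided subshift of finite type on the alphabet 'I_k with 0-1
   transition matrix A: sequences x with A (x n) (x (n+1)) = 1 for all n. *)
Definition SigmaA (k : nat) (A : 'M[bool]_k) : set (nat -> 'I_k) :=
  [set x | forall n, A (x n) (x n.+1)].

Section Defs.
Variables (R : realType) (k : nat) (A : 'M[bool]_k).
Implicit Types f g : (nat -> 'I_k) -> R.

Definition contSigma f : Prop :=
  forall x, SigmaA A x -> forall eps : R, 0 < eps ->
    exists N : nat, forall y, SigmaA A y ->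
      (forall n, (n < N)%N -> y n = x n) -> `|f y - f x| < eps.

(* L is a positive linear operator C(Sigma_A^+) -> C(Sigma_A^+)
   (functions are only relevant through their values on Sigma_A^+). *)
Definition positive_linear_op (L : ((nat -> 'I_k) -> R) -> ((nat -> 'I_k) -> R)) : Prop :=
  [/\ (forall f, contSigma f -> contSigma (L f)),
      (forall f g (a b : R), contSigma f -> contSigma g ->
         forall x, SigmaA A x ->
           L (fun y => a * f y + b * g y) x = a * L f x + b * L g x)
    & (forall f, contSigma f -> (forall x, SigmaA A x -> 0 <= f x) ->
         forall x, SigmaA A x -> 0 <= L f x)].

Definition Pdelta (delta : R) g : Prop :=
  [/\ contSigma g,
      (forall x, SigmaA A x -> 0 < g x)
    & (forall x y, SigmaA A x -> SigmaA A y -> g x / g y <= expR delta)].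

Definition Theta f g : R :=
  ln (sup [set f x / g x | x in SigmaA A] / inf [set f x / g x | x in SigmaA A]).

End Defs.

(* Main.v *)
Require Import Defs.
From HB Require Import structures.
From mathcomp Require Import all_boot all_order all_algebra.
From mathcomp Require Import all_classical all_reals all_analysis.
From mathcomp Require Import ring lra.
Import Order.TTheory GRing.Theory Num.Theory.
Local Open Scope ring_scope.
Set Implicit Arguments. Unset Strict Implicit.
Lemma cont_const (R : realType) k (A : 'M[bool]_k) (c : R) :
  contSigma A (fun _ => c).
Proof. by move=> x _ e e0; exists 0%N => y _ _; rewrite subrr normr0. Qed.

Lemma cont_ext (R : realType) k (A : 'M[bool]_k) (f g : (nat -> 'I_k) -> R) :
  contSigma A f -> (forall y, SigmaA A y -> g y = f y) -> contSigma A g.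
Proof.
move=> cf e x Sx eps eps0; have [N HN] := cf x Sx eps eps0.
by exists N => y Sy Hy; rewrite !e //; apply: HN.
Qed.

Lemma cont_lin (R : realType) k (A : 'M[bool]_k) (f g : (nat -> 'I_k) -> R) (a b : R) :
  contSigma A f -> contSigma A g -> contSigma A (fun y => a * f y + b * g y).
Proof.
move=> cf cg x Sx eps eps0.
have e1 : 0 < eps / (2 * (`|a| + 1)) by apply: divr_gt0 => //; rewrite mulr_gt0 // ltr_wpDl.
have e2 : 0 < eps / (2 * (`|b| + 1)) by apply: divr_gt0 => //; rewrite mulr_gt0 // ltr_wpDl.
have [N1 H1] := cf x Sx _ e1; have [N2 H2] := cg x Sx _ e2.
exists (maxn N1 N2) => y Sy Hy.
have h1 := H1 y Sy (fun n hn => Hy n (leq_trans hn (leq_maxl _ _))).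
have h2 := H2 y Sy (fun n hn => Hy n (leq_trans hn (leq_maxr _ _))).
have -> : a * f y + b * g y - (a * f x + b * g x) = a * (f y - f x) + b * (g y - g x) by ring.
apply: (le_lt_trans (ler_normD _ _)); rewrite !normrM.
have q1 : `|a| * `|f y - f x| <= eps / 2.
  have : (`|a| + 1) * `|f y - f x| <= (`|a| + 1) * (eps / (2 * (`|a| + 1))).
    by apply: ler_wpM2l; [rewrite addr_ge0 | exact: ltW].
  have -> : (`|a| + 1) * (eps / (2 * (`|a| + 1))) = eps / 2.
    by field; rewrite gt_eqF // ltr_wpDl.
  apply: le_trans; rewrite mulrDl mul1r lerDl //.
have q2 : `|b| * `|g y - g x| < eps / 2.
  have : (`|b| + 1) * `|g y - g x| < (`|b| + 1) * (eps / (2 * (`|b| + 1))).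
    by rewrite ltr_pM2l // ltr_wpDl.
  have -> : (`|b| + 1) * (eps / (2 * (`|b| + 1))) = eps / 2.
    by field; rewrite gt_eqF // ltr_wpDl.
  apply: le_lt_trans; rewrite mulrDl mul1r lerDl //.
lra.
Qed.
Lemma cont_div (R : realType) k (A : 'M[bool]_k) (f g : (nat -> 'I_k) -> R) (c : R) :
  contSigma A f -> contSigma A g -> 0 < c -> (forall y, SigmaA A y -> c <= g y) ->
  contSigma A (fun y => f y / g y).
Proof.
move=> cf cg c0 gc x Sx eps eps0.
have gx0 : 0 < g x by apply: lt_le_trans (gc x Sx).
have e1 : 0 < eps * c / 2 by rewrite divr_gt0 // mulr_gt0.
have e2 : 0 < eps * c * g x / (2 * (`|f x| + 1)).
  by rewrite divr_gt0 ?mulr_gt0 // ltr_wpDl.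
have [N1 H1] := cf x Sx _ e1; have [N2 H2] := cg x Sx _ e2.
exists (maxn N1 N2) => y Sy Hy.
have h1 := H1 y Sy (fun n hn => Hy n (leq_trans hn (leq_maxl _ _))).
have h2 := H2 y Sy (fun n hn => Hy n (leq_trans hn (leq_maxr _ _))).
have gy0 : 0 < g y by apply: lt_le_trans (gc y Sy).
have -> : f y / g y - f x / g x = ((f y - f x) * g x + f x * (g x - g y)) / (g y * g x).
  by field; rewrite !gt_eqF.
rewrite normrM normfV (gtr0_norm (mulr_gt0 gy0 gx0)) ltr_pdivrMr ?mulr_gt0 //.
apply: (le_lt_trans (ler_normD _ _)); rewrite !normrM (gtr0_norm gx0).
have q1 : `|f y - f x| * g x < eps * c / 2 * g x by rewrite ltr_pM2r.
have q2 : `|f x| * `|g x - g y| <= eps * c * g x / 2.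
  have : (`|f x| + 1) * `|g x - g y| <= (`|f x| + 1) * (eps * c * g x / (2 * (`|f x| + 1))).
    by apply: ler_wpM2l; [rewrite addr_ge0 | rewrite distrC; exact: ltW].
  have -> : (`|f x| + 1) * (eps * c * g x / (2 * (`|f x| + 1))) = eps * c * g x / 2.
    by field; rewrite gt_eqF // ltr_wpDl.
  apply: le_trans; rewrite mulrDl mul1r lerDl //.
have q3 : eps * c * g x <= eps * (g y * g x).
  rewrite mulrA; apply: ler_wpM2r; [exact: ltW| apply: ler_wpM2l; [exact: ltW | exact: gc]].
have e3 : eps * c / 2 * g x = eps * c * g x / 2 by rewrite mulrAC.
lra.
Qed.

Lemma L_mono (R : realType) k (A : 'M[bool]_k) L (f g : (nat -> 'I_k) -> R) :
  positive_linear_op A L -> contSigma A f -> contSigma A g ->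
  (forall z, SigmaA A z -> f z <= g z) -> forall x, SigmaA A x -> L f x <= L g x.
Proof.
case=> _ Hlin Hpos cf cg fg x Sx.
have d0 : forall z, SigmaA A z -> 0 <= 1 * g z + (-1) * f z.
  by move=> z Sz; rewrite mul1r mulN1r subr_ge0 fg.
have := Hpos _ (cont_lin 1 (-1) cg cf) d0 x Sx.
by rewrite Hlin // mul1r mulN1r subr_ge0.
Qed.

Lemma L_ext (R : realType) k (A : 'M[bool]_k) L (f g h : (nat -> 'I_k) -> R) (a b : R) :
  positive_linear_op A L -> contSigma A f -> contSigma A g ->
  (forall z, SigmaA A z -> h z = a * f z + b * g z) ->
  forall x, SigmaA A x -> L h x = a * L f x + b * L g x.
Proof.
move=> HL cf cg eh x Sx.
have ch : contSigma A h by apply: cont_ext (cont_lin a b cf cg) eh.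
case: (HL) => _ Hlin _; rewrite -Hlin //.
apply/eqP; rewrite eq_le; apply/andP; split.
  by apply: (L_mono HL ch (cont_lin a b cf cg)) => // z Sz; rewrite eh.
by apply: (L_mono HL (cont_lin a b cf cg) ch) => // z Sz; rewrite eh.
Qed.

Lemma L_scal (R : realType) k (A : 'M[bool]_k) L (f h : (nat -> 'I_k) -> R) (a : R) :
  positive_linear_op A L -> contSigma A f ->
  (forall z, SigmaA A z -> h z = a * f z) ->
  forall x, SigmaA A x -> L h x = a * L f x.
Proof.
move=> HL cf eh x Sx.
have e : forall z, SigmaA A z -> h z = a * f z + 0 * f z.
  by move=> z Sz; rewrite eh // mul0r addr0.
by rewrite (L_ext HL cf cf e Sx) mul0r addr0.
Qed.
Lemma alg0 (R : realFieldType) (C D s u M : R) :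
  1 <= C -> 1 <= D -> 1 <= M -> C + D = 2 * s ->
  (C + u) * (D + u) <= M ^+ 2 * (C * D) -> s + u <= M * s.
Proof.
move=> C1 D1 M1 eCD H.
have s0 : 0 < s by lra.
have CDs : C * D <= s * s.
  have h : 0 <= (C - D) * (C - D) by rewrite -expr2 sqr_ge0.
  have -> : s * s = (C + D) * (C + D) / 4.
    by rewrite eCD; field.
  rewrite ler_pdivlMr //; lra.
have e2 : (s + u) * (s + u) = (C + u) * (D + u) + s * s - C * D.
  have -> : (C + u) * (D + u) = C * D + u * (C + D) + u * u by ring.
  rewrite eCD; ring.
have hM : 0 <= (M * M - 1) * (s * s - C * D).
  apply: mulr_ge0; last by lra.
  rewrite subr_ge0; nra.
have sq : (s + u) * (s + u) <= (M * s) * (M * s).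
  have -> : M * s * (M * s) = (M * M) * (s * s) by ring.
  rewrite e2; move: H hM; rewrite expr2.
  move: (M * M) (C * D) (s * s) ((C + u) * (D + u)) => m2 cd ss X H hM.
  nra.
have Ms0 : 0 <= M * s by rewrite mulr_ge0 // ?(le_trans _ M1) // ltW.
have [h|h] := lerP (s + u) 0; first by lra.
by nra.
Qed.

Lemma alg1 (R : realFieldType) (t M al be : R) :
  0 < t -> 1 <= M -> 0 <= al <= 1 -> 0 <= be <= 1 ->
  (1 + t * al) * (1 + t - t * be) <= M ^+ 2 * ((1 + t * be) * (1 + t - t * al)) ->
  al - be <= (M - 1) * (2 + t) / (t * (M + 1)).
Proof.
move=> t0 M1 /andP[a0 a1] /andP[b0 b1] H.
have C1 : 1 <= 1 + t * be by rewrite lerDl mulr_ge0 // ltW.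
have D1 : 1 <= 1 + t - t * al.
  have : t * al <= t by nra.
  move=> ?; lra.
have eCD : 1 + t * be + (1 + t - t * al) = 2 * ((2 + t - t * (al - be)) / 2) by field.
have H' : (1 + t * be + t * (al - be)) * (1 + t - t * al + t * (al - be)) <=
   M ^+ 2 * ((1 + t * be) * (1 + t - t * al)).
  have -> : 1 + t * be + t * (al - be) = 1 + t * al by ring.
  have -> : 1 + t - t * al + t * (al - be) = 1 + t - t * be by ring.
  exact: H.
have h := alg0 C1 D1 M1 eCD H'.
have tM : 0 < t * (M + 1) by rewrite mulr_gt0 //; lra.
rewrite ler_pdivlMr //.
lra.
Qed.
Lemma ln_le_sub1 (R : realType) (x : R) : 0 < x -> ln x <= x - 1.
Proof.
move=> x0; have := @le_ln1Dx R (x - 1); have -> : 1 + (x - 1) = x by ring.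
by apply; lra.
Qed.

Lemma alg2 (R : realType) (a b rx ry M2 th : R) :
  0 < a -> a <= b -> b / a <= M2 -> a <= ry -> 0 < rx ->
  rx - ry <= th * (b - a) -> 0 <= th <= 1 ->
  ln (rx / ry) <= (1 - (1 - th) / M2) * ln (b / a).
Proof.
move=> a0 ab bM ary rx0 hr /andP[t0 t1].
have ry0 : 0 < ry by lra.
set r := b / a; set q := rx / ry.
have r1 : 1 <= r by rewrite /r ler_pdivlMr // mul1r.
have r0 : 0 < r by lra.
have rM : r <= M2 by exact: bM.
have M0 : 0 < M2 by lra.
have q0 : 0 < q by rewrite /q divr_gt0.
have qb : q <= 1 + th * (r - 1).
  have e : th * (r - 1) = th * (b - a) / a by rewrite /r; field; lra.
  rewrite e /q ler_pdivrMr //.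
  have h1 : th * (b - a) / a * ry >= th * (b - a).
    have -> : th * (b - a) / a * ry = th * (b - a) * (ry / a) by rewrite mulrAC -mulrA.
    rewrite ler_peMr //; last by rewrite ler_pdivlMr // mul1r.
    by rewrite mulr_ge0 // subr_ge0.
  lra.
have lqr : ln (q / r) <= q / r - 1 by apply: ln_le_sub1; rewrite divr_gt0.
have lnqr : ln (q / r) = ln q - ln r by rewrite ln_div // posrE.
have lr : ln r <= r - 1 by apply: ln_le_sub1.
have lr0 : 0 <= ln r by apply: ln_ge0.
have s1 : q / r - 1 <= - ((1 - th) * (r - 1) / r).
  have -> : - ((1 - th) * (r - 1) / r) = (1 + th * (r - 1)) / r - 1 by field; lra.
  by rewrite lerD2r ler_pM2r // invr_gt0.
have s2 : (1 - th) * (r - 1) / M2 <= (1 - th) * (r - 1) / r.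
  apply: ler_wpM2l; first by rewrite mulr_ge0 //; lra.
  by rewrite lef_pV2 // posrE.
have s3 : (1 - th) * ln r / M2 <= (1 - th) * (r - 1) / M2.
  apply: ler_wpM2r; first by rewrite invr_ge0 ltW.
  by apply: ler_wpM2l => //; lra.
have -> : (1 - (1 - th) / M2) * ln r = ln r - (1 - th) * ln r / M2 by field; lra.
lra.
Qed.

Definition theta1 (R : realType) (d d' : R) : R :=
  (expR d' - 1) * (2 + (expR d - 1)) / ((expR d - 1) * (expR d' + 1)).

Lemma Pd_one (R : realType) k (A : 'M[bool]_k) (d : R) : 0 <= d -> Pdelta A d (fun _ => 1).
Proof.
move=> d0; split; first exact: cont_const.
  by move=> *; exact: ltr01.
by move=> *; rewrite divr1 -expR0 ler_expR.
Qed.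

Lemma tv1 (R : realType) k (A : 'M[bool]_k) L (d d' : R) :
  positive_linear_op A L -> 0 < d' -> d' < d ->
  (forall g, Pdelta A d g -> Pdelta A d' (L g)) ->
  forall phi, contSigma A phi -> (forall z, SigmaA A z -> 0 <= phi z <= 1) ->
  forall x y, SigmaA A x -> SigmaA A y ->
  L phi x / L (fun _ => 1) x - L phi y / L (fun _ => 1) y <= theta1 d d'.
Proof.
move=> HL d'0 dd HP phi cphi phi01 x y Sx Sy.
have d0 : 0 < d by exact: lt_trans d'0 dd.
set M := expR d; set M' := expR d'.
have M1 : 1 < M by rewrite /M expR_gt1.
have M'1 : 1 < M' by rewrite /M' expR_gt1.
set t := M - 1.
have t0 : 0 < t by rewrite /t subr_gt0.
set one := (fun _ : nat -> 'I_k => (1 : R)).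
have c1 : contSigma A one := @cont_const R k A 1.
have [_ L1pos _] := HP _ (@Pd_one R k A d (ltW d0)).
set p := L one x; set q := L one y.
have p0 : 0 < p by apply: L1pos.
have q0 : 0 < q by apply: L1pos.
case: (HL) => _ _ Hpos.
have phi0 : forall z, SigmaA A z -> 0 <= phi z by move=> z /phi01 /andP[].
have phi1 : forall z, SigmaA A z -> phi z <= one z by move=> z /phi01 /andP[].
set P := L phi x; set Q := L phi y.
have P0 : 0 <= P by apply: Hpos.
have Q0 : 0 <= Q by apply: Hpos.
have Pp : P <= p by exact: (L_mono HL cphi c1 phi1 Sx).
have Qq : Q <= q by exact: (L_mono HL cphi c1 phi1 Sy).
pose f1 := fun z => 1 * one z + t * phi z.
have cf1 : contSigma A f1 := cont_lin 1 t c1 cphi.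
have Pf1 : Pdelta A d f1.
  split => //.
    move=> z Sz; rewrite /f1 /one mul1r; have := phi0 z Sz; nra.
  move=> z w Sz Sw; rewrite /f1 /one !mul1r.
  have := phi01 z Sz; have := phi01 w Sw => /andP[a0 a1] /andP[b0 b1].
  rewrite ler_pdivrMr; last by nra.
  rewrite -/M; have eM : M = 1 + t by rewrite /t; ring.
  rewrite eM; nra.
pose f2 := fun z => (1 + t) * one z + (- t) * phi z.
have cf2 : contSigma A f2 := cont_lin (1 + t) (- t) c1 cphi.
have Pf2 : Pdelta A d f2.
  split => //.
    move=> z Sz; rewrite /f2 /one mulr1; have := phi01 z Sz => /andP[a0 a1]; nra.
  move=> z w Sz Sw; rewrite /f2 /one !mulr1.
  have := phi01 z Sz; have := phi01 w Sw => /andP[a0 a1] /andP[b0 b1].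
  rewrite ler_pdivrMr; last by nra.
  rewrite -/M; have eM : M = 1 + t by rewrite /t; ring.
  rewrite eM; nra.
have [_ pos1 rat1] := HP _ Pf1.
have [_ pos2 rat2] := HP _ Pf2.
have Lf1 : forall z, SigmaA A z -> L f1 z = 1 * L one z + t * L phi z.
  by move=> z Sz; rewrite (L_ext (f:=one) (g:=phi) HL c1 cphi (fun _ _ => erefl)).
have Lf2 : forall z, SigmaA A z -> L f2 z = (1 + t) * L one z + (- t) * L phi z.
  by move=> z Sz; rewrite (L_ext (f:=one) (g:=phi) HL c1 cphi (fun _ _ => erefl)).
have i1 : p + t * P <= M' * (q + t * Q).
  have := rat1 x y Sx Sy; rewrite ler_pdivrMr ?pos1 // Lf1 // Lf1 // !mul1r.
  by rewrite mulrC.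
have i2 : (1 + t) * q - t * Q <= M' * ((1 + t) * p - t * P).
  have := rat2 y x Sy Sx; rewrite ler_pdivrMr ?pos2 // Lf2 // Lf2 // !mulNr.
  by rewrite mulrC.
set al := P / p; set be := Q / q.
have eP : P = al * p by rewrite /al divfK // gt_eqF.
have eQ : Q = be * q by rewrite /be divfK // gt_eqF.
have al01 : 0 <= al <= 1.
  by apply/andP; split; [exact: divr_ge0 P0 (ltW p0) | rewrite /al ler_pdivrMr // mul1r].
have be01 : 0 <= be <= 1.
  by apply/andP; split; [exact: divr_ge0 Q0 (ltW q0) | rewrite /be ler_pdivrMr // mul1r].
have j1 : p * (1 + t * al) <= M' * q * (1 + t * be).
  move: i1; rewrite eP eQ => h; nra.
have j2 : q * (1 + t - t * be) <= M' * p * (1 + t - t * al).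
  move: i2; rewrite eP eQ => h; nra.
have X1 : 0 <= p * (1 + t * al) by move: al01 => /andP[? ?]; nra.
have X2 : 0 <= q * (1 + t - t * be) by move: be01 => /andP[? ?]; nra.
have j := ler_pM X1 X2 j1 j2.
have key : (1 + t * al) * (1 + t - t * be) <= M' ^+ 2 * ((1 + t * be) * (1 + t - t * al)).
  have pq0 : 0 < p * q by rewrite mulr_gt0.
  rewrite -(ler_pM2l pq0).
  have -> : p * q * ((1 + t * al) * (1 + t - t * be)) = p * (1 + t * al) * (q * (1 + t - t * be)) by ring.
  have -> : p * q * (M' ^+ 2 * ((1 + t * be) * (1 + t - t * al))) = M' * q * (1 + t * be) * (M' * p * (1 + t - t * al)) by ring.
  exact: j.
have := alg1 t0 (ltW M'1) al01 be01 key.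
by rewrite /theta1 -/M -/M' -/t.
Qed.

Lemma alg3 (R : realFieldType) (G cp M2 w Y : R) :
  0 < G -> G <= M2 * cp -> 0 < M2 -> 0 <= w -> w * cp <= Y * G -> w / M2 <= Y.
Proof.
move=> G0 GM M0 w0 h.
rewrite -(ler_pM2r G0); apply: le_trans h.
rewrite -mulrA; apply: ler_wpM2l => //.
by rewrite ler_pdivrMl.
Qed.

Lemma lowbound (R : realType) k (A : 'M[bool]_k) (d : R) g x :
  Pdelta A d g -> SigmaA A x -> forall z, SigmaA A z -> g x / expR d <= g z.
Proof.
move=> [_ gp gr] Sx z Sz; have := gr x z Sx Sz.
by rewrite ler_pdivrMr ?gp // ler_pdivrMr ?expR_gt0 // mulrC.
Qed.

Lemma upbound (R : realType) k (A : 'M[bool]_k) (d : R) g x :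
  Pdelta A d g -> SigmaA A x -> forall z, SigmaA A z -> g z <= expR d * g x.
Proof.
move=> [_ gp gr] Sx z Sz; have := gr z x Sz Sx.
by rewrite ler_pdivrMr ?gp.
Qed.

Lemma rho_ge (R : realType) k (A : 'M[bool]_k) L (d' : R) f g (a : R) :
  positive_linear_op A L -> contSigma A f -> contSigma A g -> Pdelta A d' (L g) ->
  (forall z, SigmaA A z -> a * g z <= f z) ->
  forall y, SigmaA A y -> a <= L f y / L g y.
Proof.
move=> HL cf cg [_ Lgp _] h y Sy.
case: (HL) => _ Hlin Hpos.
have d0 : forall z, SigmaA A z -> 0 <= 1 * f z + (- a) * g z.
  by move=> z Sz; rewrite mul1r mulNr subr_ge0 h.
have := Hpos _ (cont_lin 1 (- a) cf cg) d0 y Sy.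
rewrite Hlin // mul1r mulNr subr_ge0 => H.
by rewrite ler_pdivlMr ?Lgp.
Qed.

Lemma rho_le (R : realType) k (A : 'M[bool]_k) L (d' : R) f g (b : R) :
  positive_linear_op A L -> contSigma A f -> contSigma A g -> Pdelta A d' (L g) ->
  (forall z, SigmaA A z -> f z <= b * g z) ->
  forall y, SigmaA A y -> L f y / L g y <= b.
Proof.
move=> HL cf cg [_ Lgp _] h y Sy.
case: (HL) => _ Hlin Hpos.
have d0 : forall z, SigmaA A z -> 0 <= b * g z + (- 1) * f z.
  by move=> z Sz; rewrite mulN1r subr_ge0 h.
have := Hpos _ (cont_lin b (- 1) cg cf) d0 y Sy.
rewrite Hlin // mulN1r subr_ge0 => H.
by rewrite ler_pdivrMr ?Lgp.
Qed.

Definition theta2 (R : realType) (d d' : R) : R :=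
  1 - (1 - theta1 d d') / (expR d) ^+ 2.

Lemma pair_bound (R : realType) k (A : 'M[bool]_k) L (d d' : R) :
  positive_linear_op A L -> 0 < d' -> d' < d ->
  (forall g, Pdelta A d g -> Pdelta A d' (L g)) ->
  forall f g, Pdelta A d f -> Pdelta A d g -> forall a b : R, 0 < a -> a < b ->
  (forall z, SigmaA A z -> a <= f z / g z <= b) ->
  forall x y, SigmaA A x -> SigmaA A y ->
  L f x / L g x - L f y / L g y <= theta2 d d' * (b - a).
Proof.
move=> HL d'0 dd HP f g Pf Pg a b a0 ab hu x y Sx Sy.
have d0 : 0 < d by exact: lt_trans d'0 dd.
set M := expR d.
have M0 : 0 < M ^+ 2 by rewrite exprn_gt0 // expR_gt0.
have [cf fpos _] := Pf; have [cg gpos _] := Pg.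
have [_ Lgpos _] := HP _ Pg.
case: (HL) => _ Hlin Hpos.
set one := (fun _ : nat -> 'I_k => (1 : R)).
have c1 : contSigma A one := @cont_const R k A 1.
have [_ L1pos _] := HP _ (@Pd_one R k A d (ltW d0)).
have cx0 : 0 < g x / M by rewrite divr_gt0 ?gpos // expR_gt0.
have cu : contSigma A (fun z => f z / g z) := cont_div cf cg cx0 (lowbound Pg Sx).
have ba0 : 0 < b - a by rewrite subr_gt0.
have ba_ne : b - a != 0 by rewrite gt_eqF.
have gne : forall z, SigmaA A z -> g z != 0 by move=> z Sz; rewrite gt_eqF ?gpos.
pose phi := fun z => (1 / (b - a)) * (f z / g z) + (- a / (b - a)) * one z.
have cphi : contSigma A phi := cont_lin _ _ cu c1.
have ephi : forall z, SigmaA A z -> phi z = (f z / g z - a) / (b - a).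
  by move=> z Sz; rewrite /phi /one; field; rewrite ba_ne gne.
have phi01 : forall z, SigmaA A z -> 0 <= phi z <= 1.
  move=> z Sz; rewrite ephi //; have /andP[h1 h2] := hu z Sz.
  apply/andP; split; first by apply: divr_ge0; [rewrite subr_ge0 | exact: ltW].
  by rewrite ler_pdivrMr // mul1r lerD2r.
have tv := tv1 HL d'0 dd HP cphi phi01 Sx Sy.
set cx := g x / M.
pose k2 := fun z => ((b - a) * cx) * one z + (- ((b - a) * cx)) * phi z.
have hA : (b - a) * cx * (L one x - L phi x) <= b * L g x + (-1) * L f x.
  have -> : (b - a) * cx * (L one x - L phi x) = L k2 x by rewrite /k2 [RHS]Hlin //; ring.
  rewrite -Hlin //; apply: (L_mono HL (cont_lin _ _ c1 cphi) (cont_lin _ _ cg cf)) => // z Sz.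
  have /andP[h1 h2] := hu z Sz.
  have gz0 := gpos z Sz.
  have e1 : (b - a) * cx * one z + - ((b - a) * cx) * phi z = cx * (b - f z / g z).
    by rewrite ephi // /one; field; rewrite ?ba_ne ?gne ?gt_eqF //.
  have e2 : b * g z + (-1) * f z = g z * (b - f z / g z) by field; rewrite ?ba_ne ?gne ?gt_eqF //.
  rewrite e1 e2; apply: ler_wpM2r; first by rewrite subr_ge0.
  exact: lowbound Pg Sx z Sz.
pose k3 := fun z => (M * g x) * one z + 0 * one z.
have hB : forall w, SigmaA A w -> L g w <= M * g w * L one w.
  move=> w Sw.
  have -> : M * g w * L one w = L (fun z => (M * g w) * one z + 0 * one z) w.
    by rewrite [RHS]Hlin // mul0r addr0.
  apply: (L_mono HL cg (cont_lin _ _ c1 c1)) => // z Sz.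
  by rewrite /one mulr1 mul0r addr0; exact: upbound Pg Sw z Sz.
set cy := g y / M.
have hC : (b - a) * cy * L phi y <= 1 * L f y + (- a) * L g y.
  have -> : (b - a) * cy * L phi y = L (fun z => ((b - a) * cy) * phi z + 0 * phi z) y.
    by rewrite [RHS]Hlin // mul0r addr0.
  rewrite -Hlin //; apply: (L_mono HL (cont_lin _ _ cphi cphi) (cont_lin _ _ cf cg)) => // z Sz.
  have /andP[h1 h2] := hu z Sz.
  have gz0 := gpos z Sz.
  have e1 : (b - a) * cy * phi z + 0 * phi z = cy * (f z / g z - a).
    by rewrite ephi //; field; rewrite ?ba_ne ?gne ?gt_eqF //.
  have e2 : 1 * f z + (- a) * g z = g z * (f z / g z - a) by field; rewrite ?ba_ne ?gne ?gt_eqF //.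
  rewrite e1 e2; apply: ler_wpM2r; first by rewrite subr_ge0.
  exact: lowbound Pg Sy z Sz.
set p := L one x; set q := L one y; set P := L phi x; set Q := L phi y.
set Gx := L g x; set Gy := L g y; set Fx := L f x; set Fy := L f y.
have p0 : 0 < p by apply: L1pos.
have q0 : 0 < q by apply: L1pos.
have Gx0 : 0 < Gx by apply: Lgpos.
have Gy0 : 0 < Gy by apply: Lgpos.
set al := P / p; set be := Q / q.
have eP : P = al * p by rewrite /al divfK // gt_eqF.
have eQ : Q = be * q by rewrite /be divfK // gt_eqF.
have Pp : P <= p.
  apply: (L_mono HL cphi c1) => // z Sz; have /andP[] := phi01 z Sz; done.
have Q0 : 0 <= Q by apply: Hpos => // z Sz; have /andP[] := phi01 z Sz.
have al1 : al <= 1 by rewrite /al ler_pdivrMr // mul1r.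
have be0 : 0 <= be by rewrite /be divr_ge0 // ltW.
have hBx : Gx <= M ^+ 2 * (cx * p).
  have -> : M ^+ 2 * (cx * p) = M * g x * p.
    by rewrite /cx; field; rewrite gt_eqF ?expR_gt0.
  exact: hB.
have hBy : Gy <= M ^+ 2 * (cy * q).
  have -> : M ^+ 2 * (cy * q) = M * g y * q.
    by rewrite /cy; field; rewrite gt_eqF ?expR_gt0.
  exact: hB.
have rA := alg3 Gx0 hBx M0 (w := (b - a) * (1 - al)) (Y := b - Fx / Gx).
have rC := alg3 Gy0 hBy M0 (w := (b - a) * be) (Y := Fy / Gy - a).
have wA : 0 <= (b - a) * (1 - al) by rewrite mulr_ge0 ?subr_ge0 // ltW.
have wC : 0 <= (b - a) * be by rewrite mulr_ge0 // ltW.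
have rA' : (b - a) * (1 - al) / M ^+ 2 <= b - Fx / Gx.
  apply: rA wA _.
  have -> : (b - Fx / Gx) * Gx = b * Gx + (-1) * Fx by field; rewrite ?ba_ne ?gne ?gt_eqF //.
  apply: le_trans hA; rewrite -/p -/P eP; rewrite le_eqVlt; apply/orP; left; apply/eqP; ring.
have rC' : (b - a) * be / M ^+ 2 <= Fy / Gy - a.
  apply: rC wC _.
  have -> : (Fy / Gy - a) * Gy = 1 * Fy + (- a) * Gy by field; rewrite ?ba_ne ?gne ?gt_eqF //.
  apply: le_trans hC; rewrite -/Q eQ; rewrite le_eqVlt; apply/orP; left; apply/eqP; ring.
have tv' : al - be <= theta1 d d' by exact: tv.
have : (b - a) * (1 - (al - be)) / M ^+ 2 >= (b - a) * (1 - theta1 d d') / M ^+ 2.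
  apply: ler_wpM2r; first by rewrite invr_ge0 ltW.
  by apply: ler_wpM2l; [exact: ltW | lra].
rewrite /theta2 -/M => h.
have e : (b - a) * (1 - (al - be)) / M ^+ 2 = (b - a) * (1 - al) / M ^+ 2 + (b - a) * be / M ^+ 2.
  by field; rewrite gt_eqF ?expR_gt0.
have e' : (1 - (1 - theta1 d d') / M ^+ 2) * (b - a) = (b - a) - (b - a) * (1 - theta1 d d') / M ^+ 2.
  by field; rewrite gt_eqF ?expR_gt0.
rewrite e'; lra.
Qed.

Lemma theta_bounds (R : realType) (d d' : R) : 0 < d' -> d' < d ->
  0 <= theta2 d d' < 1.
Proof.
move=> d'0 dd.
have M1 : 1 < expR d by rewrite expR_gt1; exact: lt_trans d'0 dd.
have M'1 : 1 < expR d' by rewrite expR_gt1.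
have MM : expR d' < expR d by rewrite ltr_expR.
move: M1 M'1 MM; rewrite /theta2 /theta1.
move: (expR d) (expR d') => M M' M1 M'1 MM.
have t0 : 0 < (M - 1) * (M' + 1) by rewrite mulr_gt0 //; lra.
have th0 : 0 <= (M' - 1) * (2 + (M - 1)) / ((M - 1) * (M' + 1)).
  by apply: divr_ge0; [apply: mulr_ge0; lra | exact: ltW].
have th1 : (M' - 1) * (2 + (M - 1)) / ((M - 1) * (M' + 1)) < 1.
  rewrite ltr_pdivrMr // mul1r; nra.
set th := _ / _ in th0 th1 *.
have M20 : 1 <= M ^+ 2 by rewrite expr2; nra.
have M2p : 0 < M ^+ 2 by lra.
apply/andP; split.
  rewrite subr_ge0 ler_pdivrMr // mul1r; lra.
rewrite ltrBlDr ltrDl divr_gt0 //; lra.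
Qed.

Lemma ratio_bound (R : realType) k (A : 'M[bool]_k) (d : R) f g z w :
  Pdelta A d f -> Pdelta A d g -> SigmaA A z -> SigmaA A w ->
  f z / g z <= (expR d) ^+ 2 * (f w / g w).
Proof.
move=> Pf Pg Sz Sw.
have [_ fp _] := Pf; have [_ gp _] := Pg.
have h1 := upbound Pf Sw Sz.
have h2 := upbound Pg Sz Sw.
have M0 := expR_gt0 d.
move: (fp z Sz) (fp w Sw) (gp z Sz) (gp w Sw) h1 h2.
move: (expR d) M0 (f z) (f w) (g z) (g w) => M M0 fz fw gz gw fz0 fw0 gz0 gw0 h1 h2.
rewrite ler_pdivrMr //.
have e : M ^+ 2 * (fw / gw) * gz = (M * fw) * (M * gz) / gw by field; rewrite gt_eqF.
rewrite e ler_pdivlMr //; apply: ler_pM; lra.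
Qed.

Unset Implicit Arguments.

Theorem lemma5p8 (R : realType) (k : nat) (A : 'M[bool]_k)
  (L : ((nat -> 'I_k) -> R) -> ((nat -> 'I_k) -> R)) (delta delta' : R) :
  positive_linear_op A L ->
  0 < delta' -> delta' < delta ->
  (forall g, Pdelta A delta g -> Pdelta A delta' (L g)) ->
  exists kappa : R, kappa < 1 /\
    (forall f g, Pdelta A delta f -> Pdelta A delta g ->
       Theta A (L f) (L g) <= kappa * Theta A f g).
Proof.
move=> HL d'0 dd HP.
have /andP[th0 th1] := theta_bounds d'0 dd.
set M := expR delta.
have M0 : 0 < M ^+ 2 by rewrite exprn_gt0 // expR_gt0.
set kappa := 1 - (1 - theta2 delta delta') / M ^+ 2.
exists kappa; split.
  by rewrite /kappa ltrBlDr ltrDl divr_gt0 // subr_gt0.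
move=> f g Pf Pg.
have [[x0 Sx0]|nS] := pselect (exists x, SigmaA A x); last first.
  have E : SigmaA A = set0.
    by apply/seteqP; split => x // Sx; exfalso; apply: nS; exists x.
  by rewrite /Theta E !image_set0 sup0 inf0 mul0r ln0 // mulr0.
have [cf fpos _] := Pf; have [cg gpos _] := Pg.
have [cLf Lfpos _] := HP _ Pf; have [cLg Lgpos _] := HP _ Pg.
rewrite /Theta.
set S := [set f x / g x | x in SigmaA A]%classic.
set S' := [set L f x / L g x | x in SigmaA A]%classic.
set b := sup S; set a := inf S.
have u0 : forall z, SigmaA A z -> 0 < f z / g z by move=> z Sz; rewrite divr_gt0 ?fpos ?gpos.
have Sne : (S !=set0)%classic by exists (f x0 / g x0); exists x0.
have hub : has_ubound S.
  by exists (M ^+ 2 * (f x0 / g x0)) => _ [z Sz <-]; exact: ratio_bound Pf Pg Sz Sx0.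
have hlb : has_lbound S.
  by exists 0 => _ [z Sz <-]; exact: ltW (u0 z Sz).
have hb : forall z, SigmaA A z -> f z / g z <= b.
  by move=> z Sz; apply: ub_le_sup => //; exists z.
have ha : forall z, SigmaA A z -> a <= f z / g z.
  by move=> z Sz; apply: ge_inf => //; exists z.
have a0 : 0 < a.
  apply: (@lt_le_trans _ _ (f x0 / g x0 / M ^+ 2)); first by rewrite divr_gt0 ?u0.
  apply: lb_le_inf => // _ [z Sz <-].
  by rewrite ler_pdivrMr // [X in _ <= X]mulrC; exact: ratio_bound Pf Pg Sx0 Sz.
have ab : a <= b by apply: le_trans (ha _ Sx0) (hb _ Sx0).
have bMa : b / a <= M ^+ 2.
  rewrite ler_pdivrMr //.
  have : b / M ^+ 2 <= a.
    apply: lb_le_inf => // _ [w Sw <-].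
    rewrite ler_pdivrMr // [X in _ <= X]mulrC; apply: ge_sup => // _ [z Sz <-]; exact: ratio_bound Pf Pg Sz Sw.
  by rewrite ler_pdivrMr // mulrC.
set K := expR (kappa * ln (b / a)).
have K0 : 0 < K by exact: expR_gt0.
have rho0 : forall z, SigmaA A z -> 0 < L f z / L g z.
  by move=> z Sz; rewrite divr_gt0 ?Lfpos ?Lgpos.
have rhoa : forall y, SigmaA A y -> a <= L f y / L g y.
  apply: (rho_ge HL cf cg (HP _ Pg)) => z Sz.
  by rewrite -ler_pdivlMr ?gpos //; exact: ha.
have rhob : forall y, SigmaA A y -> L f y / L g y <= b.
  apply: (rho_le HL cf cg (HP _ Pg)) => z Sz.
  by rewrite -ler_pdivrMr ?gpos //; exact: hb.
have key : forall x y, SigmaA A x -> SigmaA A y -> L f x / L g x <= K * (L f y / L g y).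
  move=> x y Sx Sy.
  have [eab|ltab] := eqVneq a b.
    have -> : K = 1 by rewrite /K eab divff ?gt_eqF -?eab // ln1 mulr0 expR0.
    by rewrite mul1r; apply: le_trans (rhob x Sx) _; rewrite -eab; exact: rhoa.
  have ltab' : a < b by rewrite lt_neqAle ltab.
  have pb := pair_bound HL d'0 dd HP Pf Pg a0 ltab'
    (fun z Sz => introT andP (conj (ha z Sz) (hb z Sz))) Sx Sy.
  have := alg2 a0 ab bMa (rhoa y Sy) (rho0 x Sx) pb (introT andP (conj th0 (ltW th1))).
  rewrite -/M -/kappa => hl.
  rewrite -ler_pdivrMr ?rho0 //.
  rewrite -[X in X <= _]lnK ?posrE ?divr_gt0 ?rho0 ?Lfpos ?Lgpos //.
  by rewrite ler_expR.
have S'ne : (S' !=set0)%classic by exists (L f x0 / L g x0); exists x0.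
have supub : forall y, SigmaA A y -> sup S' <= K * (L f y / L g y).
  move=> y0 Sy0; apply: ge_sup => // _ [x1 Sx1 <-]; exact: key x1 y0 Sx1 Sy0.
have hub' : has_ubound S'.
  by exists (K * (L f x0 / L g x0)) => _ [x Sx <-]; exact: key.
have sup0' : 0 < sup S'.
  apply: lt_le_trans (rho0 _ Sx0) _; apply: ub_le_sup => //; by exists x0.
have infa : a <= inf S'.
  by apply: lb_le_inf => // _ [y Sy <-]; exact: rhoa.
have inf0' : 0 < inf S' by apply: lt_le_trans a0 infa.
have supinf : sup S' / K <= inf S'.
  apply: lb_le_inf => // _ [y Sy <-].
  by rewrite ler_pdivrMr // [X in _ <= X]mulrC; exact: supub.
have : sup S' / inf S' <= K.
  by move: supinf; rewrite !ler_pdivrMr // [X in _ -> _ <= X]mulrC.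
move=> h.
have : ln (sup S' / inf S') <= ln K.
  by rewrite ler_ln ?posrE ?divr_gt0.
by rewrite /K expRK.
Qed.
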